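(* Let $A\in\mathbb{R}^{m\times n}$ with $m\ge n$ have singular value decomposition $A=U\Sigma V^T$ with singular values $\sigma_1\ge\cdots\ge\sigma_k>\theta>\sigma_{k+1}\ge\cdots\ge\sigma_n$ for a threshold $\theta>0$. Let $b\le k$, $q\ge0$ be integers, $\Omega_1$ an $n\times b$ standard Gaussian matrix, $\widehat Q_1\in\mathbb{R}^{m\times b}$ a matrix with orthonormal columns spanning the range of $(AA^T)^qA\Omega_1$, $\widehat U_1$ a $b\times b$ orthogonal matrix of eigenvectors of $\widehat Q_1^TAA^T\widehat Q_1$ (decreasing eigenvalue order), and $Q_1=\widehat Q_1\widehat U_1$. Let $\epsilon=\mathbf{d}(\mathcal{R}(Q_1),\mathcal{R}_\theta(A))$ and suppose \[\epsilon<1\quad\text{and}\quad \sigma_k-\epsilon\|A\|_2>\theta>\sigma_{k+1}+\epsilon\|A\|_2 .\] Let $B=(I_m-Q_1Q_1^T)A$. Then $B$ maintains the singular values of $A$ below $\theta$ with absolute error not exceeding $\epsilon\|A\|_2$, in the sense that $|\sigma_{k-b+i}(B)-\sigma_{k+i}|\le\epsilon\|A\|_2$ for $i=1,\dots,n-k$; and \[\mathrm{rank}_\theta(B)=\mathrm{rank}_\theta(A)-b .\]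
   Context: $\sigma_j(M)$ is the $j$-th largest singular value of $M$. The numerical range $\mathcal{R}_\theta(A)$ is the span of the first $k$ left singular vectors $u_1,\dots,u_k$ of $A$ (those with singular values $>\theta$), and $\mathrm{rank}_\theta(M)$ (numerical rank) is the number of singular values of $M$ exceeding $\theta$. For matrices $W,Z$ with orthonormal columns, $\mathbf{d}(\mathcal{R}(W),\mathcal{R}(Z))=\|(I-ZZ^T)WW^T\|_2$; for a subspace, use an orthonormal basis for $Z$. *)

(* Defs.v *)
From HB Require Import structures.
From mathcomp Require Import all_boot all_order all_algebra.
From mathcomp Require Import boolp classical_sets reals.
Set Implicit Arguments. Unset Strict Implicit. Unset Printing Implicit Defensive.
Import Order.TTheory GRing.Theory Num.Theory.
Local Open Scope classical_set_scope.
Local Open Scope ring_scope.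

Section Defs.
Variable R : realType.

Definition vnorm n (x : 'cV[R]_n) : R := Num.sqrt (\sum_i x i 0 ^+ 2).

Definition opnorm m n (M : 'M[R]_(m, n)) : R :=
  reals.sup [set vnorm (M *m x) | x in [set x : 'cV[R]_n | vnorm x = 1]].

Definition rdiag m n (s : nat -> R) : 'M[R]_(m, n) :=
  \matrix_(i, j) if (i : nat) == (j : nat) then s (j : nat) else 0.

Definition orthogonal_mx n (U : 'M[R]_n) := U^T *m U = 1%:M.

Definition orthonormal_cols m n (Q : 'M[R]_(m, n)) := Q^T *m Q = 1%:M.

(* A = U Sigma V^T is a singular value decomposition with singular values
   s 0 >= s 1 >= ... >= s (n-1) >= 0 (0-based indexing; s j for j >= n is
   irrelevant). *)
Definition is_svd m n (A : 'M[R]_(m, n)) (U : 'M[R]_m) (s : nat -> R)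
    (V : 'M[R]_n) :=
  [/\ orthogonal_mx U, orthogonal_mx V,
      (forall j, (j < n)%N -> 0 <= s j),
      (forall i j, (i <= j < n)%N -> s j <= s i) &
      A = U *m rdiag m n s *m V^T].

Definition num_rank (theta : R) n (s : nat -> R) : nat :=
  #|[set j : 'I_n | theta < s (j : nat)]|.

(* Z Z^T where Z = first k columns of U (orthonormal basis of R_theta(A)) *)
Definition lead_proj m (U : 'M[R]_m) (k : nat) : 'M[R]_m :=
  \sum_(j < m | (j < k)%N) col j U *m (col j U)^T.

(* d(R(W), R(Z)) = || (I - Z Z^T) W W^T ||_2 given projectors *)
Definition subspace_dist m (PW PZ : 'M[R]_m) : R :=
  opnorm ((1%:M - PZ) *m PW).

End Defs.

(* Main.v *)
Require Import Defs.
From HB Require Import structures.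
From mathcomp Require Import all_boot all_order all_algebra.
From mathcomp Require Import boolp classical_sets reals.
From mathcomp Require Import zify ring lra.
Import Order.TTheory GRing.Theory Num.Theory.
Local Open Scope ring_scope.

Module Helpers.
Set Implicit Arguments. Unset Strict Implicit. Unset Printing Implicit Defensive.

Definition dot (R : realType) n (x y : 'cV[R]_n) : R := \sum_i x i 0 * y i 0.

Lemma dotE (R : realType) n (x y : 'cV[R]_n) : dot x y = (x^T *m y) 0 0.
Proof. by rewrite /dot !mxE; apply: eq_bigr => i _; rewrite mxE. Qed.

Lemma dotC (R : realType) n (x y : 'cV[R]_n) : dot x y = dot y x.
Proof. by apply: eq_bigr => i _; rewrite mulrC. Qed.

Lemma dotDl (R : realType) n (x y z : 'cV[R]_n) : dot (x + y) z = dot x z + dot y z.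
Proof. by rewrite /dot -big_split; apply: eq_bigr => i _; rewrite mxE mulrDl. Qed.

Lemma dotNl (R : realType) n (x z : 'cV[R]_n) : dot (- x) z = - dot x z.
Proof. by rewrite /dot -sumrN; apply: eq_bigr => i _; rewrite mxE mulNr. Qed.

Lemma dotZl (R : realType) n a (x z : 'cV[R]_n) : dot (a *: x) z = a * dot x z.
Proof. by rewrite /dot mulr_sumr; apply: eq_bigr => i _; rewrite mxE mulrA. Qed.

Lemma dot_ge0 (R : realType) n (x : 'cV[R]_n) : 0 <= dot x x.
Proof. by apply: sumr_ge0 => i _; rewrite -expr2 sqr_ge0. Qed.

Lemma dot_eq0 (R : realType) n (x : 'cV[R]_n) : dot x x = 0 -> x = 0.
Proof.
move=> /eqP; rewrite psumr_eq0 => [/allP H|i _]; last by rewrite -expr2 sqr_ge0.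
apply/matrixP => i j; rewrite ord1 mxE.
have := H i (mem_index_enum _); rewrite -expr2 sqrf_eq0 => /eqP ->; by [].
Qed.

Lemma dot_mull (R : realType) m n (M : 'M[R]_(m, n)) x y :
  dot (M *m x) y = dot x (M^T *m y).
Proof. by rewrite !dotE trmx_mul mulmxA. Qed.

Lemma vnorm_dot (R : realType) n (x : 'cV[R]_n) : vnorm x = Num.sqrt (dot x x).
Proof. by rewrite /vnorm /dot; congr Num.sqrt; apply: eq_bigr => i _; rewrite expr2. Qed.

Lemma vnorm_ge0 (R : realType) n (x : 'cV[R]_n) : 0 <= vnorm x.
Proof. by rewrite vnorm_dot sqrtr_ge0. Qed.

Lemma vnorm_sq (R : realType) n (x : 'cV[R]_n) : vnorm x ^+ 2 = dot x x.
Proof. by rewrite vnorm_dot sqr_sqrtr // dot_ge0. Qed.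

Lemma vnorm_eq0 (R : realType) n (x : 'cV[R]_n) : vnorm x = 0 -> x = 0.
Proof. by move=> h; apply: dot_eq0; rewrite -vnorm_sq h expr0n. Qed.

Lemma vnorm_le (R : realType) n p (x : 'cV[R]_n) (y : 'cV[R]_p) c :
  0 <= c -> dot x x <= c ^+ 2 * dot y y -> vnorm x <= c * vnorm y.
Proof.
move=> c0 h; rewrite -(@ler_pXn2r _ 2) //; last first.
  by rewrite nnegrE mulr_ge0 // vnorm_ge0.
  by rewrite nnegrE vnorm_ge0.
by rewrite exprMn !vnorm_sq.
Qed.

Lemma vnorm_ge (R : realType) n p (x : 'cV[R]_n) (y : 'cV[R]_p) c :
  0 <= c -> c ^+ 2 * dot y y <= dot x x -> c * vnorm y <= vnorm x.
Proof.
move=> c0 h; rewrite -(@ler_pXn2r _ 2) //; last first.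
  by rewrite nnegrE vnorm_ge0.
  by rewrite nnegrE mulr_ge0 // vnorm_ge0.
by rewrite exprMn !vnorm_sq.
Qed.

Lemma CS (R : realType) n (x y : 'cV[R]_n) : dot x y ^+ 2 <= dot x x * dot y y.
Proof.
have [y0|yp] := eqVneq (dot y y) 0.
  have -> : dot x y = 0 by rewrite (dot_eq0 y0) /dot big1 // => i _; rewrite mxE mulr0.
  by rewrite y0 expr0n /= mulr0.
have ypos : 0 < dot y y by rewrite lt_def yp dot_ge0.
have := dot_ge0 (dot y y *: x - dot x y *: y).
rewrite !(dotDl, dotNl, dotZl) ![dot _ (_ + _)]dotC !(dotDl, dotNl, dotZl).
rewrite [dot y x]dotC => h.
have : 0 <= dot y y * (dot y y * dot x x - dot x y ^+ 2) by nra.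
by rewrite pmulr_rge0 // subr_ge0 mulrC.
Qed.

Lemma dot_le_norm (R : realType) n (x y : 'cV[R]_n) : dot x y <= vnorm x * vnorm y.
Proof.
have := CS x y; rewrite -!vnorm_sq -exprMn => h.
have P0 : 0 <= vnorm x * vnorm y by rewrite mulr_ge0 ?vnorm_ge0.
have [d0|d0] := lerP (dot x y) 0; first exact: le_trans d0 P0.
by rewrite -(@ler_pXn2r _ 2) // nnegrE ltW.
Qed.

Lemma vnorm_triangle (R : realType) n (x y : 'cV[R]_n) :
  vnorm (x + y) <= vnorm x + vnorm y.
Proof.
rewrite -(@ler_pXn2r _ 2) ?nnegrE ?addr_ge0 ?vnorm_ge0 //.
rewrite vnorm_sq !(dotDl) ![dot _ (_ + _)]dotC !dotDl [dot y x]dotC.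
have := dot_le_norm x y; rewrite -!vnorm_sq => h; nra.
Qed.

Local Open Scope classical_set_scope.
Local Open Scope ring_scope.

Lemma dot_coord_le1 (R : realType) n (x : 'cV[R]_n) i : dot x x = 1 -> `|x i 0| <= 1.
Proof.
move=> h.
have : x i 0 ^+ 2 <= 1.
  rewrite -h /dot (bigD1 i) //= expr2 lerDl.
  by apply: sumr_ge0 => j _; rewrite -expr2 sqr_ge0.
rewrite -real_normK ?num_real // => h2.
have := normr_ge0 (x i 0); nra.
Qed.

Lemma vnormZ (R : realType) n a (x : 'cV[R]_n) : vnorm (a *: x) = `|a| * vnorm x.
Proof.
rewrite !vnorm_dot dotZl dotC dotZl mulrA -expr2 sqrtrM ?sqr_ge0 //.
by rewrite sqrtr_sqr.
Qed.

Lemma opnorm_has_ub (R : realType) m n (M : 'M[R]_(m, n)) :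
  has_ubound [set vnorm (M *m x) | x in [set x : 'cV[R]_n | vnorm x = 1]].
Proof.
exists (Num.sqrt (\sum_i (\sum_j `|M i j|) ^+ 2)) => _ [x /= hx <-].
rewrite vnorm_dot ler_sqrt; last by apply: sumr_ge0 => i _; rewrite sqr_ge0.
have hx1 : dot x x = 1 by rewrite -vnorm_sq hx expr1n.
rewrite /dot; apply: ler_sum => i _; rewrite -expr2.
have hy : `|(M *m x) i 0| <= \sum_j `|M i j|.
  rewrite mxE; apply: le_trans (ler_norm_sum _ _ _) _.
  apply: ler_sum => j _; rewrite normrM.
  by rewrite -[X in _ <= X]mulr1 ler_wpM2l // dot_coord_le1.
rewrite -real_normK ?num_real //.
have := normr_ge0 ((M *m x) i 0); nra.
Qed.

Lemma opnorm_le (R : realType) m n (M : 'M[R]_(m, n)) x :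
  vnorm (M *m x) <= opnorm M * vnorm x.
Proof.
have [x0|xn0] := eqVneq (vnorm x) 0.
  rewrite x0 mulr0 (vnorm_eq0 x0) mulmx0 vnorm_dot /dot big1 ?sqrtr0 // => i _.
  by rewrite mxE mul0r.
have xp : 0 < vnorm x by rewrite lt_def xn0 vnorm_ge0.
have h1 : vnorm ((vnorm x)^-1 *: x) = 1.
  by rewrite vnormZ ger0_norm ?mulVf // invr_ge0 ltW.
have : vnorm (M *m ((vnorm x)^-1 *: x)) <= opnorm M.
  apply: sup_upper_bound; first split.
  - by exists (vnorm (M *m ((vnorm x)^-1 *: x))); exists ((vnorm x)^-1 *: x).
  - exact: opnorm_has_ub.
  by exists ((vnorm x)^-1 *: x).
rewrite -scalemxAr vnormZ ger0_norm; last by rewrite invr_ge0 ltW.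
move=> h.
have ip : 0 < (vnorm x)^-1 by rewrite invr_gt0.
by rewrite -(ler_pM2l ip) mulrCA mulVf ?mulr1.
Qed.

Lemma opnorm_ge0 (R : realType) m n (M : 'M[R]_(m, n)) : 0 <= opnorm M.
Proof.
case: n M => [|n] M.
  rewrite /opnorm.
  have -> : [set vnorm (M *m x) | x in [set x : 'cV[R]_0 | vnorm x = 1]] = set0.
    apply/seteqP; split => // _ [x0 /= hx _]; move: hx.
    by rewrite vnorm_dot /dot big_ord0 sqrtr0 => /eqP; rewrite eq_sym oner_eq0.
  by rewrite sup0.
set x : 'cV[R]_n.+1 := delta_mx 0 0.
have hx : vnorm x = 1.
  rewrite vnorm_dot /dot (bigD1 0) //= big1 ?mxE ?mulr1 ?addr0 ?sqrtr1 //.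
  by move=> i /negbTE hi; rewrite mxE hi mul0r.
apply: le_trans (vnorm_ge0 (M *m x)) _.
by have := opnorm_le M x; rewrite hx mulr1.
Qed.

Local Close Scope classical_set_scope.

Lemma sum_sel (R : realType) m n (a : 'I_n -> R) : (n <= m)%N ->
  \sum_(i < m) (\sum_(l < n) (if (i : nat) == (l : nat) then a l else 0)) ^+ 2
  = \sum_(l < n) a l ^+ 2.
Proof.
move=> le_nm.
have inner : forall b : 'I_n -> R, forall i : 'I_m,
   \sum_(l < n) (if (i : nat) == (l : nat) then b l else 0) =
   if [pick l : 'I_n | (i : nat) == l] is Some l0 then b l0 else 0.
  move=> b i; case: pickP => [l0 /= h0|hn].
    rewrite (bigD1 l0) //= h0 big1 ?addr0 // => l hl.
    case: eqP => // eil; move/eqP: hl => hl; exfalso; apply: hl.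
    by apply: val_inj => /=; rewrite -eil; apply/eqP.
  by rewrite big1 // => l _; rewrite hn.
transitivity (\sum_(i < m) \sum_(l < n) (if (i : nat) == (l : nat) then a l ^+ 2 else 0)).
  apply: eq_bigr => i _; rewrite !inner; by case: pickP => // *; rewrite expr0n.
rewrite exchange_big /=; apply: eq_bigr => l _.
rewrite (bigD1 (widen_ord le_nm l)) //= eqxx big1 ?addr0 // => i hi.
case: eqP => // eil; move/eqP: hi => hi; exfalso; apply: hi.
by apply: val_inj => /=; rewrite eil.
Qed.

Lemma orth_dot (R : realType) m (U : 'M[R]_m) y : orthogonal_mx U ->
  dot (U *m y) (U *m y) = dot y y.
Proof. by move=> hU; rewrite dot_mull mulmxA hU mul1mx. Qed.

Lemma orthT (R : realType) m (U : 'M[R]_m) : orthogonal_mx U -> U *m U^T = 1%:M.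
Proof. by move=> hU; apply: mulmx1C. Qed.

Lemma normsq_Udiag (R : realType) m n (U : 'M[R]_m) s (c : 'cV[R]_n) :
  (n <= m)%N -> orthogonal_mx U ->
  dot (U *m (rdiag m n s *m c)) (U *m (rdiag m n s *m c)) =
  \sum_(l < n) s l ^+ 2 * c l 0 ^+ 2.
Proof.
move=> le_nm hU; rewrite orth_dot // /dot.
have := sum_sel (fun l : 'I_n => s l * c l 0) le_nm.
rewrite (eq_bigr (fun l : 'I_n => s l ^+ 2 * c l 0 ^+ 2)); last by move=> l _; rewrite exprMn.
move=> <-; apply: eq_bigr => i _; rewrite -expr2 mxE; congr (_ ^+ 2).
by apply: eq_bigr => l _; rewrite mxE; case: eqP => _; rewrite ?mul0r.
Qed.

Lemma svd_coords (R : realType) m n (M : 'M[R]_(m, n)) U s V (x : 'cV[R]_n) :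
  (n <= m)%N -> is_svd M U s V ->
  dot (M *m x) (M *m x) = \sum_(l < n) s l ^+ 2 * (V^T *m x) l 0 ^+ 2 /\
  dot x x = \sum_(l < n) (V^T *m x) l 0 ^+ 2.
Proof.
move=> le_nm [hU hV _ _ ->]; split.
  by rewrite -!mulmxA normsq_Udiag.
have -> : x = V *m (V^T *m x) by rewrite mulmxA orthT // mul1mx.
rewrite orth_dot // mulmxA hV mul1mx /dot.
by apply: eq_bigr => l _; rewrite expr2.
Qed.

Lemma card_setP n (p : pred nat) : #|[set l : 'I_n | p l]| = count p (iota 0 n).
Proof.
rewrite -val_enum_ord count_map cardsE cardE /enum_mem size_filter.
by rewrite count_filter; apply: eq_count => i; rewrite /= !inE ?andbT.
Qed.

Lemma count_lt t n : count (fun l => (l < t)%N) (iota 0 n) = minn t n.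
Proof.
elim: n => [|n IH]; first by rewrite minn0.
rewrite -addn1 iotaD count_cat IH /= add0n addn0.
case: (ltnP n t) => h; lia.
Qed.

Lemma count_ge t n : count (fun l => (t <= l)%N) (iota 0 n) = (n - minn t n)%N.
Proof.
have := count_predC (fun l => (l < t)%N) (iota 0 n).
rewrite size_iota count_lt (eq_count (a2 := fun l => (t <= l)%N)); first lia.
by move=> l /=; rewrite -leqNgt.
Qed.

Definition selmx (R : realType) n (S : {set 'I_n}) : 'M[R]_(#|S|, n) :=
  \matrix_(r, j) ((enum_val r == j)%:R).

Lemma selmx_orth (R : realType) n (S : {set 'I_n}) :
  selmx R S *m (selmx R S)^T = 1%:M.
Proof.
apply/matrixP => r r'; rewrite !mxE (bigD1 (enum_val r)) //= big1.
  rewrite !mxE eqxx mul1r addr0.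
  suff -> : (enum_val r' == enum_val r) = (r == r') by [].
  by apply/eqP/eqP => [/enum_val_inj ->|->].
by move=> j /negbTE hj; rewrite !mxE eq_sym hj mul0r.
Qed.

Lemma rank_selmx (R : realType) n (S : {set 'I_n}) : \rank (selmx R S) = #|S|.
Proof.
apply/eqP; rewrite eqn_leq rank_leq_row /=.
by rewrite -{1}(mxrank1 R #|S|) -(selmx_orth R S) mxrankM_maxl.
Qed.

Lemma rank_selV (R : realType) n (S : {set 'I_n}) (V : 'M[R]_n) :
  orthogonal_mx V -> \rank (selmx R S *m V^T) = #|S|.
Proof.
move=> hV; rewrite mxrankMfree ?rank_selmx // row_free_unit.
by case: (mulmx1_unit (orthT hV)).
Qed.

Lemma sel_coord (R : realType) n (S : {set 'I_n}) (V : 'M[R]_n) (u : 'rV[R]_n) l :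
  orthogonal_mx V -> (u <= selmx R S *m V^T)%MS -> l \notin S ->
  (V^T *m u^T) l 0 = 0.
Proof.
move=> hV /submxP [w ->] hl.
rewrite !trmx_mul trmxK !mulmxA hV mul1mx mxE big1 // => r _.
rewrite !mxE; case: eqP => [e|]; last by rewrite mul0r.
by move: hl; rewrite -e enum_valP.
Qed.

Lemma exists_inter (R : realType) n r p (X : 'M[R]_(r, n)) (Y : 'M[R]_(p, n)) :
  (n < \rank X + \rank Y)%N ->
  exists u : 'rV[R]_n, [/\ u != 0, (u <= X)%MS & (u <= Y)%MS].
Proof.
move=> h.
have hc := mxrank_sum_cap X Y.
have hle := rank_leq_col (X + Y)%MS.
have : (\rank (X :&: Y)%MS != 0)%N by lia.
rewrite mxrank_eq0 => hC.
case: (pickP (fun i => row i (X :&: Y)%MS != 0)) => [i hi|hn].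
  exists (row i (X :&: Y)%MS); split => //.
    exact: submx_trans (row_sub _ _) (capmxSl _ _).
  exact: submx_trans (row_sub _ _) (capmxSr _ _).
case/negP: hC; apply/eqP/row_matrixP => i.
by move: (hn i) => /negbFE /eqP ->; rewrite row0.
Qed.

Lemma rv_dot_pos (R : realType) n (u : 'rV[R]_n) : u != 0 -> 0 < vnorm u^T.
Proof.
move=> hu; rewrite lt_def vnorm_ge0 andbT; apply/eqP => /vnorm_eq0 h.
by case/eqP: hu; rewrite -[u]trmxK h trmx0.
Qed.

Lemma svd_lb (R : realType) m n (M : 'M[R]_(m, n)) U s V r (X : 'M[R]_(r, n)) c j :
  (n <= m)%N -> is_svd M U s V -> (j < n)%N -> (j < \rank X)%N ->
  (forall u : 'rV[R]_n, (u <= X)%MS -> c * vnorm u^T <= vnorm (M *m u^T)) ->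
  c <= s j.
Proof.
move=> le_nm hsvd ljn ljX hX.
have [hU hV hs0 hsd _] := hsvd.
have [c0|c0] := lerP c 0; first exact: le_trans c0 (hs0 _ ljn).
pose S := [set l : 'I_n | (j <= l)%N].
have cS : #|S| = (n - j)%N.
  by rewrite card_setP count_ge; lia.
have [u [u0 uX uS]] : exists u : 'rV[R]_n,
    [/\ u != 0, (u <= X)%MS & (u <= selmx R S *m V^T)%MS].
  by apply: exists_inter; rewrite rank_selV // cS; lia.
have up := rv_dot_pos u0.
have h1 := hX u uX.
have h2 : vnorm (M *m u^T) <= s j * vnorm u^T.
  apply: vnorm_le; first exact: hs0.
  have [-> ->] := svd_coords u^T le_nm hsvd.
  rewrite mulr_sumr; apply: ler_sum => l _.
  have [jl|lj] := leqP j l.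
    apply: ler_wpM2r; first exact: sqr_ge0.
    rewrite lerXn2r ?nnegrE ?hs0 //; apply: hsd; have := ltn_ord l; lia.
  rewrite (sel_coord hV uS) ?expr0n ?mulr0 //.
  by rewrite inE -ltnNge.
have := le_trans h1 h2.
by rewrite ler_pM2r.
Qed.

Lemma svd_ub (R : realType) m n (M : 'M[R]_(m, n)) U s V r (X : 'M[R]_(r, n)) c j :
  (n <= m)%N -> is_svd M U s V -> (j < n)%N -> (n <= \rank X + j)%N ->
  (forall u : 'rV[R]_n, (u <= X)%MS -> vnorm (M *m u^T) <= c * vnorm u^T) ->
  s j <= c.
Proof.
move=> le_nm hsvd ljn ljX hX.
have [hU hV hs0 hsd _] := hsvd.
pose S := [set l : 'I_n | (l <= j)%N].
have cS : #|S| = j.+1 by rewrite (card_setP n (fun l => (l <= j)%N)) (eq_count (a2 := fun l => (l < j.+1)%N)) // count_lt; lia.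
have [u [u0 uX uS]] : exists u : 'rV[R]_n,
    [/\ u != 0, (u <= X)%MS & (u <= selmx R S *m V^T)%MS].
  by apply: exists_inter; rewrite rank_selV // cS; lia.
have up := rv_dot_pos u0.
have h1 := hX u uX.
have h2 : s j * vnorm u^T <= vnorm (M *m u^T).
  apply: vnorm_ge; first exact: hs0.
  have [-> ->] := svd_coords u^T le_nm hsvd.
  rewrite mulr_sumr; apply: ler_sum => l _.
  have [lj|jl] := leqP l j.
    apply: ler_wpM2r; first exact: sqr_ge0.
    rewrite lerXn2r ?nnegrE ?hs0 //; apply: hsd; have := ltn_ord l; lia.
  rewrite (sel_coord hV uS) ?expr0n ?mulr0 //.
  by rewrite inE -ltnNge.
have := le_trans h2 h1.
by rewrite ler_pM2r.
Qed.

Lemma cap_rank_ge (R : realType) n r p (X : 'M[R]_(r, n)) (Y : 'M[R]_(p, n)) :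
  (\rank X + \rank Y <= \rank (X :&: Y)%MS + n)%N.
Proof. by have := mxrank_sum_cap X Y; have := rank_leq_col (X + Y)%MS; lia. Qed.

Lemma proj_cross (R : realType) m (P : 'M[R]_m) x :
  P^T = P -> P *m P = P -> dot (P *m x) ((1%:M - P) *m x) = 0.
Proof.
move=> hT hI; rewrite dot_mull hT mulmxA mulmxBr mulmx1 hI subrr mul0mx.
by rewrite /dot big1 // => i _; rewrite mxE mulr0.
Qed.

Lemma proj_pyth (R : realType) m (P : 'M[R]_m) x :
  P^T = P -> P *m P = P ->
  dot x x = dot (P *m x) (P *m x) + dot ((1%:M - P) *m x) ((1%:M - P) *m x).
Proof.
move=> hT hI.
have ex : x = P *m x + (1%:M - P) *m x by rewrite mulmxBl mul1mx addrC subrK.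
transitivity (dot (P *m x + (1%:M - P) *m x) (P *m x + (1%:M - P) *m x)); first by rewrite -ex.
have dotDr : forall a b c : 'cV[R]_m, dot a (b + c) = dot a b + dot a c.
  by move=> a b c; rewrite dotC dotDl dotC [dot c a]dotC.
rewrite dotDl !dotDr proj_cross // [dot ((1%:M - P) *m x) (P *m x)]dotC proj_cross //; lra.
Qed.

Lemma proj_le (R : realType) m (P : 'M[R]_m) x :
  P^T = P -> P *m P = P ->
  vnorm (P *m x) <= vnorm x /\ vnorm ((1%:M - P) *m x) <= vnorm x.
Proof.
move=> hT hI; have h := proj_pyth x hT hI.
have h1 := dot_ge0 (P *m x); have h2 := dot_ge0 ((1%:M - P) *m x).
split; rewrite -[X in _ <= X]mul1r; apply: vnorm_le => //; rewrite expr1n mul1r; lra.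
Qed.

Lemma key_fact (R : realType) m (P PZ : 'M[R]_m) e (w : 'cV[R]_m) :
  P^T = P -> P *m P = P -> PZ^T = PZ -> PZ *m PZ = PZ -> 0 <= e -> e < 1 ->
  P *m w = w -> vnorm ((1%:M - PZ) *m w) <= e * vnorm w ->
  vnorm ((1%:M - P) *m (PZ *m w)) <= e * vnorm (PZ *m w).
Proof.
move=> hT hI hZT hZI e0 e1 hw hb.
set z := PZ *m w.
have hW : dot ((1%:M - PZ) *m w) ((1%:M - PZ) *m w) <= e ^+ 2 * dot w w.
  by rewrite -!vnorm_sq -exprMn lerXn2r // nnegrE ?mulr_ge0 ?vnorm_ge0.
have pw := proj_pyth w hZT hZI.
have pz := proj_pyth z hT hI.
have zw : dot z w = dot z z by rewrite /z !dot_mull hZT mulmxA hZI.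
have pzw : dot (P *m z) w = dot z z by rewrite dot_mull hT hw zw.
have cs := CS (P *m z) w; rewrite pzw in cs.
apply: vnorm_le => //.
move: (dot_ge0 z) (dot_ge0 (P *m z)) (dot_ge0 ((1%:M - P) *m z)) (dot_ge0 w)
  (dot_ge0 ((1%:M - PZ) *m w)) hW pw pz cs.
set a := dot z z; set p := dot (P *m z) (P *m z).
set d := dot ((1%:M - P) *m z) ((1%:M - P) *m z); set W := dot w w.
set f := dot ((1%:M - PZ) *m w) ((1%:M - PZ) *m w).
move=> a0 p0 d0 W0 f0 hW pw pz cs.
have e2 : 0 <= 1 - e ^+ 2 by rewrite expr2; nra.
have h1 : (1 - e ^+ 2) * W <= a by lra.
have h3 : a ^+ 2 * (1 - e ^+ 2) <= p * a.
  apply: le_trans (_ : p * W * (1 - e ^+ 2) <= _).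
    by rewrite ler_wpM2r.
  by rewrite -mulrA ler_wpM2l // mulrC.
have [a00|apos] := eqVneq a 0.
  rewrite a00 mulr0; lra.
have ap : 0 < a by rewrite lt_def apos.
have h4 : a * (1 - e ^+ 2) <= p.
  by rewrite -(ler_pM2l ap) mulrA -expr2; nra.
nra.
Qed.

Definition Ekmx (R : realType) m k : 'M[R]_m :=
  \matrix_(a, c) (((a == c) && (a < k)%N)%:R).

Lemma Ek_tr (R : realType) m k : (Ekmx R m k)^T = Ekmx R m k.
Proof.
apply/matrixP => a c; rewrite !mxE eq_sym.
by case: eqP => [->|]; rewrite ?andbF.
Qed.

Lemma Ek_idem (R : realType) m k : Ekmx R m k *m Ekmx R m k = Ekmx R m k.
Proof.
apply/matrixP => a c; rewrite !mxE (bigD1 a) //= big1 ?addr0.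
  rewrite !mxE eqxx /=; case: (a < k)%N; rewrite ?andbF ?mul1r ?mul0r //.
by move=> j /negbTE hj; rewrite !mxE eq_sym hj mul0r.
Qed.

Lemma Ek_sel (R : realType) m k :
  Ekmx R m k = (selmx R [set a : 'I_m | (a < k)%N])^T *m selmx R [set a : 'I_m | (a < k)%N].
Proof.
apply/matrixP => a c; rewrite !mxE.
have [ha|ha] := boolP (a \in [set a : 'I_m | (a < k)%N]).
  rewrite (bigD1 (enum_rank_in ha a)) //= big1.
    rewrite !mxE enum_rankK_in // eqxx mul1r addr0.
    by move: ha; rewrite inE => ->; rewrite andbT.
  move=> r hr; rewrite !mxE; case: eqP => [e|]; last by rewrite mul0r.
  have := enum_valK_in ha r; rewrite e => h.
  by move: hr; rewrite h eqxx.
rewrite big1.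
  by move: ha; rewrite inE => /negbTE ->; rewrite andbF.
move=> r _; rewrite !mxE; case: eqP => [e|]; last by rewrite mul0r.
by move: ha; rewrite -e enum_valP.
Qed.

Lemma Ek_rank (R : realType) m k : (\rank (Ekmx R m k) <= k)%N.
Proof.
rewrite Ek_sel; apply: leq_trans (mxrankM_maxr _ _) _.
rewrite rank_selmx (card_setP m (fun a => (a < k)%N)) count_lt; lia.
Qed.

Lemma Ek_diag (R : realType) m n k s :
  Ekmx R m k *m rdiag m n s = rdiag m n (fun l => if (l < k)%N then s l else 0).
Proof.
apply/matrixP => a l; rewrite !mxE (bigD1 a) //= big1 ?addr0.
  rewrite !mxE eqxx /=; case: eqP => [e|]; rewrite ?mulr0 //.
  by rewrite e; case: (l < k)%N; rewrite ?mul1r ?mul0r.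
by move=> j /negbTE hj; rewrite !mxE eq_sym hj mul0r.
Qed.

Lemma lead_projE (R : realType) m (U : 'M[R]_m) k :
  lead_proj U k = U *m Ekmx R m k *m U^T.
Proof.
apply/matrixP => a c; rewrite /lead_proj summxE !mxE.
rewrite big_mkcond /=; apply: eq_bigr => j _.
rewrite !mxE big_ord1 !mxE (bigD1 j) //= big1 ?addr0.
  by rewrite !mxE eqxx /=; case: (j < k)%N; rewrite ?mulr1 ?mulr0 ?mul0r.
by move=> l /negbTE hl; rewrite !mxE hl mulr0.
Qed.

Lemma PZ_facts (R : realType) m (U : 'M[R]_m) k : orthogonal_mx U ->
  [/\ (lead_proj U k)^T = lead_proj U k,
      lead_proj U k *m lead_proj U k = lead_proj U k &
      (\rank (lead_proj U k) <= k)%N].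
Proof.
move=> hU; rewrite lead_projE; split.
- by rewrite !trmx_mul trmxK Ek_tr mulmxA.
- rewrite -!mulmxA [U^T *m (U *m _)]mulmxA hU mul1mx.
  by rewrite [Ekmx R m k *m (Ekmx R m k *m U^T)]mulmxA Ek_idem.
- apply: leq_trans (mxrankM_maxl _ _) _.
  by apply: leq_trans (mxrankM_maxr _ _) (Ek_rank R m k).
Qed.

Lemma L1 (R : realType) m n (A : 'M[R]_(m, n)) U s V (P : 'M[R]_m) b UB sB VB j :
  (n <= m)%N -> is_svd A U s V -> P^T = P -> (\rank P <= b)%N ->
  is_svd ((1%:M - P) *m A) UB sB VB -> (j + b < n)%N -> s (j + b)%N <= sB j.
Proof.
move=> le_nm hA hT hrP hB hjb.
have [hU hV hs0 hsd hAe] := hA.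
pose S := [set l : 'I_n | (l <= j + b)%N].
have cS : #|S| = ((j + b).+1)%N.
  by rewrite (card_setP n (fun l => (l <= j + b)%N)) (eq_count (a2 := fun l => (l < (j + b).+1)%N)) // count_lt; lia.
pose X := (selmx R S *m V^T :&: kermx (A^T *m P))%MS.
apply: (svd_lb (X := X) le_nm hB) => //.
- lia.
- have h1 := cap_rank_ge (selmx R S *m V^T) (kermx (A^T *m P)).
  have h3 := mxrankM_maxr A^T P.
  have h4 : \rank (selmx R S *m V^T) = ((j + b).+1)%N by rewrite rank_selV.
  move: h1 h4; rewrite mxrank_ker /X.
  set a := \rank (selmx R S *m V^T); set c := \rank (_ :&: _)%MS.
  move=> h1 h4. move: hrP h3 hjb. set rP := \rank P. set r := \rank (_ *m P). move=> *. lia.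
move=> u uX.
have uS : (u <= selmx R S *m V^T)%MS := submx_trans uX (capmxSl _ _).
have /sub_kermxP uK : (u <= kermx (A^T *m P))%MS := submx_trans uX (capmxSr _ _).
have PA : P *m A *m u^T = 0.
  by have := congr1 trmx uK; rewrite trmx0 !trmx_mul trmxK hT.
rewrite mulmxBl mul1mx mulmxBl PA subr0.
apply: vnorm_ge; first by apply: hs0; lia.
have [-> ->] := svd_coords u^T le_nm hA.
rewrite mulr_sumr; apply: ler_sum => l _.
have [lj|jl] := leqP l (j + b).
  apply: ler_wpM2r; first exact: sqr_ge0.
  have h0 : 0 <= s (j + b)%N by apply: hs0; lia.
  have hl : s (j + b)%N <= s l by apply: hsd; have := ltn_ord l; lia.
  rewrite !expr2; nra.
rewrite (sel_coord hV uS) ?expr0n ?mulr0 //.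
by rewrite inE -ltnNge.
Qed.

Lemma card_S2 n k i : (k + i <= n)%N ->
  #|[set l : 'I_n | (l < k)%N || (k + i <= l)%N]| = (n - i)%N.
Proof.
move=> h.
rewrite (card_setP n (fun l => (l < k)%N || (k + i <= l)%N)).
have := count_predUI (fun l => (l < k)%N) (fun l => (k + i <= l)%N) (iota 0 n).
rewrite count_lt count_ge.
rewrite (eq_count (a1 := predI _ _) (a2 := pred0)) ?count_pred0; last first.
  by move=> l /=; apply/negbTE/negP => /andP [h1 h2]; lia.
have -> : count (predU (fun l => (l < k)%N) (fun l => (k + i <= l)%N)) (iota 0 n)
  = count (fun l => (l < k)%N || (k + i <= l)%N) (iota 0 n) by apply: eq_count.
lia.
Qed.

Lemma diag_compl (R : realType) m n k (U : 'M[R]_m) s (V : 'M[R]_n) :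
  orthogonal_mx U ->
  (1%:M - lead_proj U k) *m (U *m rdiag m n s *m V^T) =
  U *m rdiag m n (fun l => if (l < k)%N then 0 else s l) *m V^T.
Proof.
move=> hU; rewrite lead_projE mulmxBl mul1mx.
rewrite -!mulmxA [U^T *m (U *m _)]mulmxA hU mul1mx.
rewrite [Ekmx R m k *m (rdiag m n s *m V^T)]mulmxA Ek_diag.
rewrite !mulmxA -mulmxBl -mulmxBr; congr (_ *m _ *m _).
apply/matrixP => a l; rewrite !mxE.
by case: ((a : nat) == (l : nat)); case: (l < k)%N; rewrite ?subrr ?subr0.
Qed.

Lemma L2 (R : realType) m n k b (A : 'M[R]_(m, n)) U s V (P : 'M[R]_m) e UB sB VB i :
  (n <= m)%N -> is_svd A U s V -> P^T = P -> P *m P = P -> (b <= \rank P)%N ->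
  (k <= n)%N -> 0 <= e -> e < 1 ->
  (forall w, vnorm ((1%:M - lead_proj U k) *m P *m w) <= e * vnorm w) ->
  is_svd ((1%:M - P) *m A) UB sB VB -> (b <= k)%N -> (i < n - k)%N ->
  sB (k - b + i)%N <= s (k + i)%N + e * opnorm A.
Proof.
move=> le_nm hA hT hI hbP hkn e0 e1 heps hB hbk hi.
have [hU hV hs0 hsd hAe] := hA.
have [hZT hZI hZr] := PZ_facts k hU.
have yE : (1%:M - lead_proj U k) *m A =
    U *m rdiag m n (fun l => if (l < k)%N then 0 else s l) *m V^T.
  by rewrite {1}hAe diag_compl.
move: heps hZT hZI hZr yE; set PZ := lead_proj U k => heps hZT hZI hZr yE.
pose W' := (P *m PZ)%R.
pose F := A^T *m PZ *m cokermx W'.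
pose S := [set l : 'I_n | (l < k)%N || (k + i <= l)%N].
have cS : \rank (selmx R S *m V^T) = (n - i)%N.
  by rewrite rank_selV // card_S2 //; lia.
pose X := (selmx R S *m V^T :&: kermx F)%MS.
have cap0 : \rank (P :&: kermx PZ)%MS = 0%N.
  apply/eqP; rewrite mxrank_eq0; apply/eqP/row_matrixP => r; rewrite row0.
  set v := row r _.
  have vP : (v <= P)%MS := submx_trans (row_sub _ _) (capmxSl _ _).
  have /sub_kermxP vZ : (v <= kermx PZ)%MS := submx_trans (row_sub _ _) (capmxSr _ _).
  have [w0 hw0] := submxP vP.
  have Py : P *m v^T = v^T by rewrite hw0 trmx_mul hT mulmxA hI.
  have Zy : PZ *m v^T = 0 by have := congr1 trmx vZ; rewrite trmx_mul hZT trmx0.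
  have := heps v^T; rewrite -mulmxA Py mulmxBl mul1mx Zy subr0 => h.
  have h0 : vnorm v^T = 0 by have := vnorm_ge0 v^T; nra.
  by have := congr1 trmx (vnorm_eq0 h0); rewrite trmxK trmx0.
have rW : (b <= \rank W')%N.
  by have := mxrank_mul_ker P PZ; rewrite cap0 addn0 => h; rewrite /W' h.
have rF : (\rank F + b <= k)%N.
  have h1 := mxrank_mul_ker PZ (cokermx W').
  have h2 : (W' <= PZ :&: kermx (cokermx W'))%MS.
    by rewrite sub_capmx submxMl /= sub_kermx -submxE submx_refl.
  have h3 := mxrankS h2.
  have h4 : (\rank F <= \rank (PZ *m cokermx W'))%N by rewrite /F -mulmxA mxrankM_maxr.
  move: h1 h3 h4 hZr rW.
  set r1 := \rank (PZ *m _); set r2 := \rank (PZ :&: _)%MS; set r3 := \rank PZ.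
  set r4 := \rank W'; set r5 := \rank F.
  move=> *; lia.
apply: (svd_ub (X := X) le_nm hB).
- lia.
- have h1 := cap_rank_ge (selmx R S *m V^T) (kermx F).
  move: h1 cS; rewrite mxrank_ker /X.
  set a := \rank (selmx R S *m V^T); set c := \rank (_ :&: _)%MS.
  move=> h1 cS; move: rF; set rf := \rank F => rF; lia.
move=> u uX.
have uS : (u <= selmx R S *m V^T)%MS := submx_trans uX (capmxSl _ _).
have /sub_kermxP uK : (u <= kermx F)%MS := submx_trans uX (capmxSr _ _).
have hz : (u *m A^T *m PZ <= W')%MS.
  by rewrite submxE; apply/eqP; rewrite -uK /F !mulmxA.
have [w0 hw0] := submxP hz.
pose w := P *m w0^T.
have hzw : PZ *m (A *m u^T) = PZ *m w.
  have := congr1 trmx hw0; rewrite /W' !trmx_mul !trmxK hZT hT => h.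
  by rewrite h /w mulmxA.
have Pw : P *m w = w by rewrite /w mulmxA hI.
have kz : vnorm ((1%:M - P) *m (PZ *m (A *m u^T))) <= e * vnorm (PZ *m (A *m u^T)).
  rewrite hzw; apply: key_fact => //.
  by have := heps w; rewrite -mulmxA Pw.
have Axe : A *m u^T = PZ *m (A *m u^T) + (1%:M - PZ) *m (A *m u^T).
  by rewrite mulmxBl mul1mx addrC subrK.
rewrite -mulmxA Axe mulmxDr.
apply: le_trans (vnorm_triangle _ _) _.
have hy1 := (proj_le ((1%:M - PZ) *m (A *m u^T)) hT hI).2.
have hz1 := (proj_le (A *m u^T) hZT hZI).1.
have hA1 := opnorm_le A u^T.
have hs : 0 <= s (k + i)%N by apply: hs0; lia.
have hy : vnorm ((1%:M - PZ) *m (A *m u^T)) <= s (k + i)%N * vnorm u^T.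
  apply: vnorm_le => //.
  rewrite mulmxA yE -!mulmxA normsq_Udiag //.
  have [_ ->] := svd_coords u^T le_nm hA.
  rewrite mulr_sumr; apply: ler_sum => l _.
  case: ifP => hlk; first by rewrite expr0n /= mul0r mulr_ge0 ?sqr_ge0.
  have [lki|kil] := leqP (k + i) l.
    apply: ler_wpM2r; first exact: sqr_ge0.
    have hl : s l <= s (k + i)%N by apply: hsd; have := ltn_ord l; lia.
    have := hs0 l (ltn_ord l); rewrite !expr2; nra.
  rewrite (sel_coord hV uS) ?expr0n ?mulr0 //.
  by rewrite inE hlk /= -ltnNge.
have h5 : e * vnorm (PZ *m (A *m u^T)) <= e * (opnorm A * vnorm u^T).
  by apply: ler_wpM2l => //; apply: le_trans hz1 hA1.
lra.
Qed.

End Helpers.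
Import Helpers.

Theorem theorem3p4 (R : realType) (m n k b q : nat)
  (A : 'M[R]_(m, n)) (U : 'M[R]_m) (s : nat -> R) (V : 'M[R]_n)
  (theta : R) (Omega1 : 'M[R]_(n, b)) (Qh1 : 'M[R]_(m, b))
  (Uh1 : 'M[R]_b) (lam : nat -> R) :
  (n <= m)%N ->
  is_svd A U s V ->
  0 < theta ->
  (k <= n)%N ->
  (forall j, (j < n)%N -> ((j < k)%N -> theta < s j) /\ ((k <= j)%N -> s j < theta)) ->
  (b <= k)%N ->
  orthonormal_cols Qh1 ->
  (Qh1^T == (iter q (mulmx (A *m A^T)) (A *m Omega1))^T)%MS ->
  orthogonal_mx Uh1 ->
  (forall i j, (i <= j < b)%N -> lam j <= lam i) ->
  (Qh1^T *m A *m A^T *m Qh1) *m Uh1 = Uh1 *m rdiag b b lam ->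
  let Q1 := Qh1 *m Uh1 in
  let eps := subspace_dist (Q1 *m Q1^T) (lead_proj U k) in
  eps < 1 ->
  ((0 < k)%N -> theta < s k.-1 - eps * opnorm A) ->
  ((k < n)%N -> s k + eps * opnorm A < theta) ->
  let B := (1%:M - Q1 *m Q1^T) *m A in
  forall (UB : 'M[R]_m) (sB : nat -> R) (VB : 'M[R]_n),
    is_svd B UB sB VB ->
    (forall i, (i < n - k)%N -> `|sB (k - b + i)%N - s (k + i)%N| <= eps * opnorm A)
    /\ num_rank theta n sB = (num_rank theta n s - b)%N.

Proof.
move=> hnm hA th0 hkn hs hbk hQ hR hUh _ _ Q1 eps he1 _ hk2 B UB sB VB hB.
have hQ1 : Q1^T *m Q1 = 1%:M.
  rewrite /Q1 trmx_mul -mulmxA [Qh1^T *m (Qh1 *m Uh1)]mulmxA hQ mul1mx.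
  exact: hUh.
set P := Q1 *m Q1^T.
have hT : P^T = P by rewrite /P trmx_mul trmxK.
have hI : P *m P = P by rewrite /P -mulmxA [Q1^T *m (Q1 *m Q1^T)]mulmxA hQ1 mul1mx.
have rP1 : (\rank P <= b)%N.
  by apply: leq_trans (mxrankM_maxl _ _) _; apply: rank_leq_col.
have rP2 : (b <= \rank P)%N.
  have : \rank (Q1^T *m P *m Q1) = b.
    by rewrite /P [Q1^T *m (Q1 *m Q1^T)]mulmxA hQ1 mul1mx hQ1 mxrank1.
  move=> <-; apply: leq_trans (mxrankM_maxl _ _) _; exact: mxrankM_maxr.
have e0 : 0 <= eps by apply: opnorm_ge0.
have heps : forall w, vnorm ((1%:M - lead_proj U k) *m P *m w) <= eps * vnorm w.
  by move=> w; apply: opnorm_le.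
have [hU hV hs0 hsd hAe] := hA.
have [_ _ hsB0 hsBd _] := hB.
have PA : (P <= A^T)%MS.
  have h1 : (Qh1^T <= A^T)%MS.
    move: hR => /andP [hR _]; apply: submx_trans hR _.
    case: q => [|q] /=; first by rewrite trmx_mul submxMl.
    by rewrite -mulmxA trmx_mul submxMl.
  apply: submx_trans h1; rewrite /P /Q1 trmx_mul.
  by rewrite [X in (X <= _)%MS]mulmxA submxMl.
have rB : (\rank B + b <= n)%N.
  rewrite -mxrank_tr /B trmx_mul.
  have -> : (1%:M - Q1 *m Q1^T)^T = 1%:M - P by rewrite linearB /= trmx1 -/P hT.
  have h1 := mxrank_mul_ker A^T (1%:M - P).
  have h2 : (P <= A^T :&: kermx (1%:M - P))%MS.
    rewrite sub_capmx; apply/andP; split => //; rewrite sub_kermx mulmxBr mulmx1 hI subrr eqxx //.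
  have h3 := mxrankS h2.
  have h4 := rank_leq_row A^T.
  move: h1 h3 h4 rP2; set r1 := \rank (A^T *m _); set r2 := \rank (_ :&: _)%MS.
  set r3 := \rank A^T; set r4 := \rank P; move=> *; lia.
have zB : forall j, (n - b <= j)%N -> (j < n)%N -> sB j <= 0.
  move=> j hj1 hj2.
  apply: (svd_ub (X := kermx B^T) hnm hB hj2).
    rewrite mxrank_ker mxrank_tr; lia.
  move=> u /sub_kermxP hu.
  have -> : B *m u^T = 0 by have := congr1 trmx hu; rewrite trmx_mul trmxK trmx0.
  by rewrite mul0r vnorm_dot /dot big1 ?sqrtr0 // => i _; rewrite mxE mul0r.
have nA0 := opnorm_ge0 A.
have ea0 : 0 <= eps * opnorm A by apply: mulr_ge0.
have up : forall i, (i < n - k)%N -> sB (k - b + i)%N <= s (k + i)%N + eps * opnorm A.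
  move=> i hi; exact: (L2 hnm hA hT hI rP2 hkn e0 he1 heps hB hbk hi).
have lo : forall j, (j + b < n)%N -> s (j + b)%N <= sB j.
  move=> j hj; exact: (L1 hnm hA hT rP1 hB hj).
split.
  move=> i hi; have h1 := up i hi.
  have h2 := lo (k - b + i)%N ltac:(lia).
  have e3 : (k - b + i + b = k + i)%N by lia.
  rewrite e3 in h2.
  rewrite ler_norml; apply/andP; split; lra.
have card_lt : forall t, (t <= n)%N -> #|[set j : 'I_n | (j < t)%N]| = t.
  by move=> t ht; rewrite (card_setP n (fun j => (j < t)%N)) count_lt; lia.
have -> : num_rank theta n s = k.
  rewrite /num_rank -[RHS](card_lt k hkn); apply: eq_card => j; rewrite [in RHS]inE unfold_in /=.
  have [hj1 hj2] := hs j (ltn_ord j).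
  apply/idP/idP => [/asboolP h|h]; last by apply/asboolP; exact: hj1.
  by apply/negPn/negP; rewrite -leqNgt => /hj2; rewrite ltNge (ltW h).
rewrite /num_rank -(card_lt (k - b)%N) ?leq_subLR; last by lia.
apply: eq_card => j; rewrite [in RHS]inE unfold_in /=.
apply/idP/idP => [/asboolP h|h]; last apply/asboolP.
  apply/negPn/negP; rewrite -leqNgt => hj.
  have [hjn|hjn] := ltnP j (n - b); last first.
    by have := zB j hjn (ltn_ord j); move: h; lra.
  have hi : (j - (k - b) < n - k)%N by lia.
  have := up _ hi; have -> : (k - b + (j - (k - b)) = j)%N by lia.
  have hkn' : (k < n)%N by lia.
  have := hk2 hkn'.
  have : s (k + (j - (k - b)))%N <= s k by apply: hsd; lia.
  move: h; lra.
have := lo j ltac:(lia).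
have [hj1 _] := hs (j + b)%N ltac:(lia).
have := hj1 ltac:(lia); lra.
Qed.
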